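(* Let $\lambda_a,\lambda_b\in\{1,2\}$ and let $u,t,v,w$ be integers such that $(u,t)$ satisfies $S_{\lambda_a,\lambda_b}$ and $u\cdot(vw)=t^3+t^{\lambda_a}+1$ (i.e. $u,t,vw$ are, in that order, three consecutive terms of $\langle u,t\rangle_{S_{\lambda_a,\lambda_b}}=\langle t,vw\rangle_{S_{3-\lambda_b,\lambda_a}}$). Then $(v,t)$ satisfies $S_{\lambda_a,\lambda_b}$ (i.e. $v,t,uw$ are, in that order, three consecutive terms of $\langle v,t\rangle_{S_{\lambda_a,\lambda_b}}=\langle t,uw\rangle_{S_{3-\lambda_b,\lambda_a}}$) if and only if $$t\mid (u-v)(u^2+uv+v^2+1)\quad\text{when }\lambda_b=1,$$ $$t\mid (u-v)\big((uw)^2+(uw)(vw)+(vw)^2+1\big)\quad\text{when }\lambda_b=2.$$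
   Context: For $\lambda_a,\lambda_b\in\{1,2\}$, a pair of integers $(x,y)$ satisfies the system $S_{\lambda_a,\lambda_b}$ if $x\mid y^3+y^{\lambda_a}+1$ and $y\mid x^3+x^{\lambda_b}+1$. For such a pair, $\langle x,y\rangle_{S_{\lambda_a,\lambda_b}}$ denotes the bi-infinite integer sequence $(u_n)$ with $u_0=x$, $u_1=y$ and $u_{n-1}u_{n+1}=u_n^3+u_n^{e_n}+1$ for all $n$, where $e_n$ has period 4 with $(e_0,e_1,e_2,e_3)=(\lambda_b,\lambda_a,3-\lambda_b,3-\lambda_a)$; sequences are identified up to shift and reversal of indices. ''$u,t,s$, in that order, are three consecutive terms of $\langle u,t\rangle_{S_{\lambda_a,\lambda_b}}$'' means $(u,t)$ satisfies $S_{\lambda_a,\lambda_b}$ and $us=t^3+t^{\lambda_a}+1$; then $(t,s)$ satisfies $S_{3-\lambda_b,\lambda_a}$. *)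

(* Defs.v *)
From Stdlib Require Import ZArith.
Open Scope Z_scope.

Definition satS (la lb : Z) (x y : Z) : Prop :=
  (x | y ^ 3 + y ^ la + 1) /\ (y | x ^ 3 + x ^ lb + 1).

(* Main.v *)
Require Import Defs.
From Stdlib Require Import ZArith Lia.
Open Scope Z_scope.

Lemma dvc (t x y z a b : Z) : (t | x) -> (t | y) -> z = a*x + b*y -> (t | z).
Proof.
  intros [k Hk] [l Hl] ->. exists (a*k+b*l). subst. ring.
Qed.

Theorem theorem11 (la lb u t v w : Z) :
  (la = 1 \/ la = 2) -> (lb = 1 \/ lb = 2) ->
  satS la lb u t ->
  u * (v * w) = t ^ 3 + t ^ la + 1 ->
  (satS la lb v t <->
     ((lb = 1 -> (t | (u - v) * (u ^ 2 + u * v + v ^ 2 + 1))) /\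
      (lb = 2 -> (t | (u - v) * ((u * w) ^ 2 + (u * w) * (v * w) + (v * w) ^ 2 + 1))))).
Proof.
  intros Hla Hlb [_ Hu] E.
  assert (Hd : (t | u*(v*w) - 1)).
  { rewrite E. destruct Hla as [->| ->].
    - exists (t^2+1). ring.
    - exists (t^2+t). ring. }
  assert (Hv1 : (v | t ^ 3 + t ^ la + 1)).
  { rewrite <- E. exists (u*w). ring. }
  unfold satS.
  destruct Hlb as [-> | ->].
  - split.
    + intros [_ Hv]. split; [|intro; lia]. intros _.
      apply (dvc t _ _ _ 1 (-1) Hu Hv). ring.
    + intros [H _]. split; [exact Hv1|].
      apply (dvc t _ _ _ 1 (-1) Hu (H eq_refl)). ring.
  - set (P := u*(v*w)) in *.
    assert (HY : (t | (v*w)^3 + v*w + 1)).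
    { assert (H1 : (t | u^3 * ((v*w)^3 + v*w + 1))).
      { apply (dvc t _ _ _ 1 (P^2+P+1+u^2) Hu Hd). unfold P. ring. }
      apply (dvc t _ _ _ ((v*w)^3) (-((v*w)^3 + v*w + 1)*(P^2+P+1)) H1 Hd).
      unfold P. ring. }
    assert (Hdiff : (u*w)^3 + u*w + 1 - ((v*w)^3 + v*w + 1)
       = w * ((u - v) * ((u * w) ^ 2 + (u * w) * (v * w) + (v * w) ^ 2 + 1))) by ring.
    split.
    + intros [_ Hv]. split; [intro; lia|]. intros _.
      assert (HZ : (t | (u*w)^3 + u*w + 1)).
      { assert (H1 : (t | v^3 * ((u*w)^3 + u*w + 1))).
        { apply (dvc t _ _ _ 1 (P^2+P+1+v^2) Hv Hd). unfold P. ring. }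
        apply (dvc t _ _ _ ((u*w)^3) (-((u*w)^3 + u*w + 1)*(P^2+P+1)) H1 Hd).
        unfold P. ring. }
      assert (H2 : (t | w * ((u - v) * ((u * w) ^ 2 + (u * w) * (v * w) + (v * w) ^ 2 + 1)))).
      { rewrite <- Hdiff. apply (dvc t _ _ _ 1 (-1) HZ HY). ring. }
      apply (dvc t _ _ _ (u*v) (-((u - v) * ((u * w) ^ 2 + (u * w) * (v * w) + (v * w) ^ 2 + 1))) H2 Hd).
      unfold P. ring.
    + intros [_ H]. split; [exact Hv1|].
      assert (HZ : (t | (u*w)^3 + u*w + 1)).
      { apply (dvc t _ _ _ w 1 (H eq_refl) HY). rewrite <- Hdiff. ring. }
      apply (dvc t _ _ _ (v^3) (-(P^2+P+1+v^2)) HZ Hd). unfold P. ring.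
Qed.
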